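(* Let $\mathcal H$ be a separable complex Hilbert space with canonical orthonormal basis $\{e_n\}$ and $S_2$ the Hilbert–Schmidt operators with $\langle\eta,\tau\rangle_2=\operatorname{tr}(\eta^*\tau)$. Let $A\in\mathcal B(S_2)$. For $n,m\in\mathbb N$, the formula $a_{nm}=\sum_{j,k}\langle\varepsilon_{nk},A\varepsilon_{mj}\rangle_2\,\varepsilon_{jk}$ (i.e. the operator with matrix entries $\langle e_j,a_{nm}e_k\rangle=\langle\varepsilon_{nk},A\varepsilon_{mj}\rangle_2$) defines an operator $a_{nm}\in\mathcal B(\mathcal H)$, and $$A\eta=\sum_{n,m}\varepsilon_{nm}\eta\, a_{nm}\qquad\text{for all }\eta\in S_2.$$
   Context: $\varepsilon_{nm}=|e_n\rangle\langle e_m|$, i.e. $\varepsilon_{nm}f=\langle e_m,f\rangle e_n$; these form an orthonormal basis of $S_2$. Inner products are anti-linear in the left argument. *)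

(* Defs.v *)
From HB Require Import structures.
From mathcomp Require Import all_boot all_order all_algebra.
From mathcomp Require Import complex.
From mathcomp Require Import all_classical all_reals all_analysis.

Set Implicit Arguments.
Unset Strict Implicit.
Unset Printing Implicit Defensive.

Import Order.TTheory GRing.Theory Num.Theory numFieldNormedType.Exports.
Local Open Scope ring_scope.
Local Open Scope complex_scope.

Notation rsum u := (limn (fun N => \sum_(0 <= k < N) u k)%R).

Section HS.
Variable R : realType.

(* The separable Hilbert space H = l^2(N; C) with canonical ebasis e_n.
   Vectors are sequences nat -> C; the l^2 condition is a predicate. *)
Definition vec := nat -> R[i].

Definition abs2 (z : R[i]) : R := complex.Re z ^+ 2 + complex.Im z ^+ 2.

Definition csum (u : nat -> R[i]) : R[i] :=
  (rsum (fun k => complex.Re (u k)) +i* rsum (fun k => complex.Im (u k))).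

Definition l2 (f : vec) : Prop :=
  (\sum_(0 <= k <oo) (abs2 (f k))%:E < +oo)%E.

Definition vnorm2 (f : vec) : R := rsum (fun k => abs2 (f k)).

Definition dotH (f g : vec) : R[i] := csum (fun k => (f k)^* * g k).

Definition ebasis (n : nat) : vec := fun k => if k == n then 1 else 0.

Definition op := vec -> vec.

Definition bounded_op (T : op) : Prop :=
  [/\ forall f, l2 f -> l2 (T f),
      forall (a : R[i]) f g, l2 f -> l2 g ->
        T (fun k => a * f k + g k) = (fun k => a * T f k + T g k)
    & exists M : R, forall f, l2 f -> vnorm2 (T f) <= M * vnorm2 f].

Definition hs (T : op) : Prop :=
  bounded_op T /\ (\sum_(0 <= k <oo) (vnorm2 (T (ebasis k)))%:E < +oo)%E.

Definition hs_norm2 (T : op) : R := rsum (fun k => vnorm2 (T (ebasis k))).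

(* <eta, tau>_2 = tr(eta^* tau) = sum_k <e_k, eta^* tau e_k>
               = sum_k <eta e_k, tau e_k> *)
Definition hs_dot (eta tau : op) : R[i] :=
  csum (fun k => dotH (eta (ebasis k)) (tau (ebasis k))).

(* equality of operators as elements of S_2 (agree on H) *)
Definition eqS2 (eta tau : op) : Prop := forall f, l2 f -> eta f = tau f.

Definition bounded_S2op (A : op -> op) : Prop :=
  [/\ forall eta, hs eta -> hs (A eta),
      forall eta tau, hs eta -> hs tau -> eqS2 eta tau -> eqS2 (A eta) (A tau),
      forall (a : R[i]) eta tau, hs eta -> hs tau ->
        eqS2 (A (fun f k => a * eta f k + tau f k))
             (fun f k => a * A eta f k + A tau f k)
    & exists M : R, forall eta, hs eta -> hs_norm2 (A eta) <= M * hs_norm2 eta].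

Definition eps (n m : nat) : op := fun f k => dotH (ebasis m) f * ebasis n k.

Definition opsub (S T : op) : op := fun f k => S f k - T f k.
Definition opsum (N : nat) (T : nat -> op) : op :=
  fun f k => \sum_(i < N) T i f k.

Definition hs_series_to (T : nat -> op) (S : op) : Prop :=
  ((fun N => hs_norm2 (opsub S (opsum N T))) @ \oo --> (0 : R))%classic.

End HS.

(* Main.v *)
Require Import Defs.
From HB Require Import structures.
From mathcomp Require Import all_boot all_order all_algebra.
From mathcomp Require Import complex.
From mathcomp Require Import all_classical all_reals all_analysis.
From mathcomp Require Import ring lra.
Import Order.TTheory GRing.Theory Num.Theory numFieldNormedType.Exports.
Set Implicit Arguments. Unset Strict Implicit. Unset Printing Implicit Defensive.
Local Open Scope ring_scope.

Section P1.
Variable R : realType.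
Implicit Types u : nat -> R.

Definition psum u N := (\sum_(0 <= k < N) u k)%R.
Definition summ u := (\sum_(0 <= k <oo) (u k)%:E < +oo)%E.
Definition van (x : nat -> R) := forall e : R, 0 < e -> exists N, forall n, (N <= n)%N -> `|x n| <= e.

Lemma psum_nd u : (forall k, 0 <= u k) -> nondecreasing_seq (psum u).
Proof.
move=> u0 m n mn; rewrite /psum (big_cat_nat (leq0n m) mn) /= lerDl.
by apply: sumr_ge0 => i _.
Qed.

Lemma psum_ge0 u N : (forall k, 0 <= u k) -> 0 <= psum u N.
Proof. by move=> u0; apply: sumr_ge0 => i _. Qed.

Lemma series_EFin u : (\sum_(0 <= k <oo) (u k)%:E)%E = limn (EFin \o psum u).
Proof. by congr (limn _); apply: funext => N; rewrite /= sumEFin. Qed.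

Lemma summ_bound u B : (forall k, 0 <= u k) -> (forall N, psum u N <= B) ->
  [/\ summ u, cvgn (psum u) & rsum u <= B].
Proof.
move=> u0 hB.
have cv : cvgn (psum u).
  apply: nondecreasing_is_cvgn; first exact: psum_nd.
  by exists B => _ [n _ <-].
split => //.
- by rewrite /summ series_EFin EFin_lim // ltry.
- by apply: limr_le => //; near=> n; apply: hB.
Unshelve. all: by end_near.
Qed.

Lemma summ_ub u : (forall k, 0 <= u k) -> summ u -> exists B, forall N, psum u N <= B.
Proof.
move=> u0; rewrite /summ.
have H N : ((psum u N)%:E <= \sum_(0 <= k <oo) (u k)%:E)%E.
  by rewrite /psum -sumEFin; apply: nneseries_lim_ge => n _ _; rewrite lee_fin.
move: H; case: (\sum_(0 <= k <oo) (u k)%:E)%E => [r| |] H hs.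
- by exists r => N; have := H N; rewrite lee_fin.
- by [].
- by have := H 0%N.
Qed.

Lemma summ_cvg u : (forall k, 0 <= u k) -> summ u ->
  cvgn (psum u) /\ forall N, psum u N <= rsum u.
Proof.
move=> u0 su; have [B hB] := summ_ub u0 su.
have [_ cv _] := summ_bound u0 hB.
split => // N; exact: (nondecreasing_cvgn_le (psum_nd u0) cv).
Qed.

Lemma rsum_ge0 u : (forall k, 0 <= u k) -> summ u -> 0 <= rsum u.
Proof.
move=> u0 su; have [_ H] := summ_cvg u0 su.
by apply: le_trans (H 0%N); rewrite /psum big_geq.
Qed.

Lemma term_le_rsum u k : (forall k, 0 <= u k) -> summ u -> u k <= rsum u.
Proof.
move=> u0 su; have [_ H] := summ_cvg u0 su.
apply: le_trans (H k.+1).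
rewrite /psum big_nat_recr //= lerDr; exact: psum_ge0.
Qed.

Lemma cvg_van (x : nat -> R) (l : R) : (x @ \oo --> l)%classic -> van (fun n => l - x n).
Proof.
move=> /cvgrPdist_le H e e0; have [N _ HN] := H e e0.
by exists N => n Hn; apply: HN.
Qed.

Lemma van_cvg0 (x : nat -> R) : van x -> (x @ \oo --> (0:R))%classic.
Proof.
move=> H; apply/cvgrPdist_le => e e0; have [N HN] := H e e0.
exists N => // n Hn /=; rewrite sub0r normrN; exact: HN.
Qed.

Lemma summ_tail u : (forall k, 0 <= u k) -> summ u -> van (fun N => rsum u - psum u N).
Proof.
move=> u0 su; have [cv _] := summ_cvg u0 su.
exact: (cvg_van cv).
Qed.

Lemma van_le (x y : nat -> R) : van y -> (forall n, 0 <= x n <= y n) -> van x.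
Proof.
move=> vy h e e0; have [N HN] := vy e e0; exists N => n Hn.
have /andP[h1 h2] := h n.
rewrite ger0_norm //; apply: le_trans h2 _; apply: le_trans (HN n Hn); exact: ler_norm.
Qed.

Lemma van_scale (x : nat -> R) (c : R) : van x -> van (fun n => c * x n).
Proof.
move=> vx e e0.
have c1 : 0 < `|c| + 1 by rewrite ltr_pwDr // normr_ge0.
have [N HN] := vx (e / (`|c| + 1)) (divr_gt0 e0 c1).
exists N => n Hn; rewrite normrM.
apply: le_trans (ler_wpM2l (normr_ge0 c) (HN n Hn)) _.
rewrite mulrA ler_pdivrMr //.
have := normr_ge0 c; nra.
Qed.

Lemma le_of_van (c a : R) (x : nat -> R) : van x -> (forall n, c <= a + x n) -> c <= a.
Proof.
move=> vx h; apply/ler_addgt0Pr => e e0.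
have [N HN] := vx e e0.
apply: le_trans (h N) _; rewrite lerD2l; apply: le_trans (ler_norm _) (HN N _) => //.
Qed.

End P1.

Section P1b.
Variable R : realType.
Implicit Types u : nat -> R.

Lemma rsum_fin u K : (forall k, (K <= k)%N -> u k = 0) -> rsum u = psum u K.
Proof.
move=> h; apply: lim_near_cst => //; near=> n.
have Kn : (K <= n)%N by near: n; exists K.
rewrite (big_cat_nat (leq0n K) Kn) /=.
have -> : \sum_(K <= i < n) u i = 0.
  by rewrite big_nat_cond big1 // => i /andP[/andP[Ki _] _]; exact: h.
by rewrite addr0.
Unshelve. all: by end_near.
Qed.

Lemma summ_fin u K : (forall k, 0 <= u k) -> (forall k, (K <= k)%N -> u k = 0) -> summ u.
Proof.
move=> u0 h; have [] // := @summ_bound _ u (psum u K) u0.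
move=> N; case: (leqP N K) => NK; first exact: psum_nd.
rewrite /psum (big_cat_nat (leq0n K) (ltnW NK)) /=.
have -> : \sum_(K <= i < N) u i = 0.
  by rewrite big_nat_cond big1 // => i /andP[/andP[Ki _] _]; exact: h.
by rewrite addr0.
Qed.

Definition cutr N u := fun k => if (k < N)%N then 0 else u k.

Lemma psum_cutr u N L : (N <= L)%N -> psum (cutr N u) L = psum u L - psum u N.
Proof.
move=> NL; rewrite /psum !(big_cat_nat (leq0n N) NL) /=.
rewrite [X in X + _]big_nat_cond big1 ?add0r; last first.
  by move=> i /andP[/andP[_ iN] _]; rewrite /cutr iN.
rewrite addrC addrK; apply: eq_big_nat => i /andP[Ni _].
by rewrite /cutr ltnNge Ni.
Qed.

Lemma summ_cutr u N : (forall k, 0 <= u k) -> summ u ->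
  summ (cutr N u) /\ rsum (cutr N u) <= rsum u - psum u N.
Proof.
move=> u0 su; have [_ hle] := summ_cvg u0 su.
have c0 k : 0 <= cutr N u k by rewrite /cutr; case: ifP.
have [] // := @summ_bound _ (cutr N u) (rsum u - psum u N) c0.
move=> L; case: (leqP N L) => NL.
  by rewrite psum_cutr // lerD2r; exact: hle.
rewrite /psum big_nat_cond big1 ?subr_ge0; first exact: hle.
by move=> i /andP[/andP[_ iL] _]; rewrite /cutr (ltn_trans iL NL).
Qed.


Lemma van_cutr u : (forall k, 0 <= u k) -> summ u -> van (fun N => rsum (cutr N u)).
Proof.
move=> u0 su; apply: van_le (summ_tail u0 su) _ => N.
have [s1 s2] := summ_cutr N u0 su.
rewrite s2 andbT; apply: rsum_ge0 s1 => k; rewrite /cutr; case: ifP => // _; exact: u0.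
Qed.

Lemma van_add (x y : nat -> R) : van x -> van y -> van (fun n => x n + y n).
Proof.
move=> vx vy e e0.
have e2 : 0 < e / 2 by rewrite divr_gt0.
have [N1 H1] := vx _ e2; have [N2 H2] := vy _ e2.
exists (maxn N1 N2) => n; rewrite geq_max => /andP[h1 h2].
apply: le_trans (ler_normD _ _) _.
have := H1 n h1; have := H2 n h2; lra.
Qed.

Lemma van_sum (x : nat -> nat -> R) K : (forall k, (k < K)%N -> van (fun N => x N k)) ->
  van (fun N => psum (x N) K).
Proof.
elim: K => [|K IH] h.
  by move=> e e0; exists 0%N => n _; rewrite /psum big_geq // normr0 ltW.
have -> : (fun N => psum (x N) K.+1) = (fun N => psum (x N) K + x N K).
  by apply: funext => N; rewrite /psum big_nat_recr.
apply: van_add; first by apply: IH => k kK; apply: h; rewrite ltnS ltnW.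
exact: h.
Qed.

Lemma van_dom (x : nat -> nat -> R) (g : nat -> R) :
  (forall N k, 0 <= x N k <= g k) -> summ g -> (forall k, van (fun N => x N k)) ->
  (forall N, summ (x N)) /\ van (fun N => rsum (x N)).
Proof.
move=> hx sg vx.
have g0 k : 0 <= g k by have /andP[a b] := hx 0%N k; exact: le_trans b.
have x0 N k : 0 <= x N k by have /andP[] := hx N k.
have [_ gle] := summ_cvg g0 sg.
have key N K L : psum (x N) L <= psum (x N) K + (rsum g - psum g K).
  case: (leqP K L) => KL.
    rewrite /psum (big_cat_nat (leq0n K) KL) /= lerD2l.
    apply: le_trans (_ : \sum_(K <= i < L) g i <= _).
      by apply: ler_sum => i _; have /andP[] := hx N i.
    have := gle L; rewrite /psum (big_cat_nat (leq0n K) KL) /=; lra.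
  have := psum_nd (x0 N) (ltnW KL); have := gle K; lra.
have sx N : summ (x N).
  by have [] := @summ_bound _ (x N) (psum (x N) 0 + (rsum g - psum g 0)) (x0 N) (key N 0%N).
split => // e e0.
have e2 : 0 < e / 2 by rewrite divr_gt0.
have [K HK] := summ_tail g0 sg e2.
have [N0 HN0] := @van_sum x K (fun k _ => vx k) (e / 2) e2.
exists N0 => N HN.
have [_ _ hb] := @summ_bound _ (x N) (psum (x N) K + (rsum g - psum g K)) (x0 N) (key N K).
have := HK K (leqnn K); have := HN0 N HN.
have r0 : 0 <= rsum (x N) by apply: rsum_ge0 (x0 N) (sx N).
rewrite (ger0_norm r0) ger0_norm; last exact: psum_ge0.
rewrite ger0_norm; last by have := gle K; lra.
lra.
Qed.

End P1b.

Section P2.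
Variable R : realType.
Local Open Scope complex_scope.
Notation C := (R[i]).
Notation e := (ebasis R).

Lemma abs2_ge0 (z : C) : 0 <= abs2 z.
Proof. by rewrite /abs2 addr_ge0 // sqr_ge0. Qed.

Lemma abs2D (a b : C) : abs2 (a + b) <= 2 * abs2 a + 2 * abs2 b.
Proof.
case: a => a1 a2; case: b => b1 b2; rewrite /abs2 /=.
have := sqr_ge0 (a1 - b1); have := sqr_ge0 (a2 - b2); nra.
Qed.

Lemma abs2M (a b : C) : abs2 (a * b) = abs2 a * abs2 b.
Proof. case: a => a1 a2; case: b => b1 b2; rewrite /abs2 /=; ring. Qed.

Lemma abs20 : abs2 (0 : C) = 0.
Proof. by rewrite /abs2 /= expr0n /= addr0. Qed.

Lemma abs21 : abs2 (1 : C) = 1.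
Proof. by rewrite /abs2 /= expr0n /= expr1n addr0. Qed.

Lemma abs2N1 : abs2 (-1 : C) = 1.
Proof. by rewrite /abs2 /= oppr0 expr0n /= sqrrN expr1n addr0. Qed.

Lemma abs2_eq0 (z : C) : abs2 z <= 0 -> z = 0.
Proof.
case: z => a b; rewrite /abs2 /= => h.
have ha : a = 0 by apply/eqP; rewrite -sqrf_eq0 eq_le sqr_ge0 andbT; nra.
have hb : b = 0 by apply/eqP; rewrite -sqrf_eq0 eq_le sqr_ge0 andbT; nra.
by rewrite ha hb.
Qed.

Lemma conjM_abs2 (z : C) : z^* * z = (abs2 z)%:C.
Proof. case: z => a b; rewrite /abs2 /= /GRing.mul /=; apply/eqP; rewrite eq_complex /=; apply/andP; split; apply/eqP; ring. Qed.

Lemma abs2_real (x : R) : abs2 (x%:C) = x ^+ 2.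
Proof. by rewrite /abs2 /= expr0n /= addr0. Qed.

Definition nc (z : C) := Num.sqrt (abs2 z).

Lemma nc_normc (z : C) : nc z = Normc.normc z.
Proof. by case: z. Qed.

Lemma nc_ge0 z : 0 <= nc z. Proof. exact: sqrtr_ge0. Qed.

Lemma nc_sqr z : nc z ^+ 2 = abs2 z.
Proof. by rewrite /nc sqr_sqrtr // abs2_ge0. Qed.

Lemma nc_sum (a : nat -> C) N : nc (\sum_(i < N) a i) <= \sum_(i < N) nc (a i).
Proof.
elim: N => [|N IH]; first by rewrite !big_ord0 /nc abs20 sqrtr0.
rewrite !big_ord_recr /=; apply: le_trans (_ : nc (\sum_(i < N) a i) + nc (a N) <= _).
  by rewrite !nc_normc; apply: le_normcD.
by rewrite lerD2r.
Qed.

Lemma ncM a b : nc (a * b) = nc a * nc b.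
Proof. by rewrite !nc_normc Normc.normcM. Qed.

Lemma real_cs (x y : nat -> R) N :
  (\sum_(i < N) x i * y i) ^+ 2 <= (\sum_(i < N) x i ^+ 2) * (\sum_(i < N) y i ^+ 2).
Proof.
elim: N => [|N IH]; first by rewrite !big_ord0 expr0n /= mul0r.
rewrite !big_ord_recr /=.
set S := \sum_(i < N) x i * y i in IH *.
set A := \sum_(i < N) x i ^+ 2 in IH *.
set B := \sum_(i < N) y i ^+ 2 in IH *.
have A0 : 0 <= A by apply: sumr_ge0 => i _; exact: sqr_ge0.
have B0 : 0 <= B by apply: sumr_ge0 => i _; exact: sqr_ge0.
set a := x N; set b := y N.
have key : 2 * S * a * b <= A * b ^+ 2 + B * a ^+ 2.
  have q0 : 0 <= A * b ^+ 2 + B * a ^+ 2 by rewrite addr_ge0 // mulr_ge0 // sqr_ge0.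
  case: (lerP (2 * S * a * b) 0) => h; first exact: le_trans h q0.
  rewrite -(ler_pXn2r (n := 2)) //; last exact: ltW.
  have h1 : (2 * S * a * b) ^+ 2 = 4 * (S ^+ 2) * (a * b) ^+ 2 by ring.
  have h2 : 4 * (S ^+ 2) * (a * b) ^+ 2 <= 4 * (A * B) * (a * b) ^+ 2.
    by rewrite ler_wpM2r ?sqr_ge0 // ler_wpM2l.
  rewrite h1; apply: le_trans h2 _.
  have : 0 <= (A * b ^+ 2 - B * a ^+ 2) ^+ 2 by exact: sqr_ge0.
  set P := (A * b ^+ 2 - B * a ^+ 2); move=> hP.
  have -> : (A * b ^+ 2 + B * a ^+ 2) ^+ 2 = P ^+ 2 + 4 * (A * B) * (a * b) ^+ 2 by rewrite /P; ring.
  by rewrite lerDr.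
have -> : (S + a * b) ^+ 2 = S ^+ 2 + 2 * S * a * b + (a * b) ^+ 2 by ring.
have -> : (A + a ^+ 2) * (B + b ^+ 2) = A * B + (A * b ^+ 2 + B * a ^+ 2) + (a * b) ^+ 2 by ring.
by rewrite lerD2r lerD.
Qed.

Lemma cplx_cs (a b : nat -> C) N :
  abs2 (\sum_(i < N) a i * b i) <= (\sum_(i < N) abs2 (a i)) * (\sum_(i < N) abs2 (b i)).
Proof.
rewrite -nc_sqr.
have h1 : nc (\sum_(i < N) a i * b i) <= \sum_(i < N) nc (a i) * nc (b i).
  by apply: le_trans (nc_sum (fun i => a i * b i) N) _; apply: ler_sum => i _; rewrite ncM.
have h2 : nc (\sum_(i < N) a i * b i) ^+ 2 <= (\sum_(i < N) nc (a i) * nc (b i)) ^+ 2.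
  have y0 := le_trans (nc_ge0 _) h1.
  by rewrite ler_pXn2r ?nnegrE ?nc_ge0.
apply: le_trans h2 _; apply: le_trans (real_cs (fun i => nc (a i)) (fun i => nc (b i)) N) _.
by under eq_bigr do rewrite nc_sqr; under [X in _ * X]eq_bigr do rewrite nc_sqr.
Qed.

End P2.

Section P3.
Variable R : realType.
Notation C := (R[i]).
Notation e := (ebasis R).
Implicit Types f g : vec R.

Lemma rsum_ext (u v : nat -> R) : (forall k, u k = v k) -> rsum u = rsum v.
Proof. by move=> h; rewrite (funext h). Qed.

Lemma csum_single (u : nat -> C) m : (forall k, k != m -> u k = 0) -> csum u = u m.
Proof.
move=> h; rewrite /csum.
have hr (F : C -> R) : F 0 = 0 -> rsum (fun k => F (u k)) = F (u m).
  move=> F0; rewrite (@rsum_fin _ _ m.+1); last first.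
    by move=> k mk; rewrite h ?F0 //; apply: contraTneq mk => ->; rewrite ltnn.
  rewrite /psum big_nat_recr //= big_nat_cond big1 ?add0r // => i /andP[/andP[_ im] _].
  by rewrite h ?F0 // ltn_eqF.
rewrite (hr (fun z => complex.Re z)) // (hr (fun z => complex.Im z)) //.
by case: (u m).
Qed.

Lemma ebasis_conj m k : (e m k)^* = e m k.
Proof. by rewrite /ebasis; case: ifP => _; [exact: conjC1 | exact: conjC0]. Qed.

Lemma dot_e m f : dotH (e m) f = f m.
Proof.
rewrite /dotH (@csum_single _ m); first by rewrite ebasis_conj /ebasis eqxx mul1r.
by move=> k km; rewrite ebasis_conj /ebasis (negbTE km) mul0r.
Qed.

Lemma dot_single (c : C) n f : dotH (fun k => c * e n k) f = c^* * f n.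
Proof.
rewrite /dotH (@csum_single _ n); first by rewrite /ebasis eqxx mulr1.
by move=> k km; rewrite /ebasis (negbTE km) mulr0 conjC0 mul0r.
Qed.

Lemma eps_eq n m f : eps n m f = fun k => f m * e n k.
Proof. by apply: funext => k; rewrite /eps dot_e. Qed.

Lemma sum_e (c : nat -> C) N k : \sum_(i < N) c i * e i k = if (k < N)%N then c k else 0.
Proof.
case: ifP => kN.
  rewrite (bigD1 (Ordinal kN)) //= /ebasis eqxx mulr1 big1 ?addr0 // => i ik.
  rewrite ifN ?mulr0 //; apply: contra ik => /eqP ki; apply/eqP/val_inj => /=; by rewrite ki.
rewrite big1 // => i _; rewrite /ebasis ifN ?mulr0 //.
by apply: contraFN kN => /eqP ->.
Qed.

Lemma abs2_single (c : C) n k : abs2 (c * e n k) = if k == n then abs2 c else 0.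
Proof. by rewrite /ebasis; case: ifP => _; rewrite ?mulr1 ?mulr0 ?abs20. Qed.

Lemma l2E f : l2 f = summ (fun k => abs2 (f k)). Proof. by []. Qed.

Lemma l2_bound f B : (forall N, psum (fun k => abs2 (f k)) N <= B) -> l2 f /\ vnorm2 f <= B.
Proof. by move=> h; have [] := summ_bound (fun k => abs2_ge0 (f k)) h. Qed.

Lemma vnorm2_ge0 f : l2 f -> 0 <= vnorm2 f.
Proof. by move=> hf; apply: rsum_ge0 hf => k; exact: abs2_ge0. Qed.

Lemma psum_le_vnorm2 f N : l2 f -> psum (fun k => abs2 (f k)) N <= vnorm2 f.
Proof. by move=> hf; have [_] := summ_cvg (fun k => abs2_ge0 (f k)) hf; apply. Qed.

Lemma coord_le f k : l2 f -> abs2 (f k) <= vnorm2 f.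
Proof. by move=> hf; apply: (term_le_rsum k (fun k => abs2_ge0 (f k)) hf). Qed.

Lemma l2_comb (a : C) f g : l2 f -> l2 g ->
  l2 (fun k => a * f k + g k) /\ vnorm2 (fun k => a * f k + g k) <= 2 * abs2 a * vnorm2 f + 2 * vnorm2 g.
Proof.
move=> hf hg; apply: l2_bound => N.
apply: le_trans (_ : \sum_(0 <= k < N) (2 * abs2 a * abs2 (f k) + 2 * abs2 (g k)) <= _).
  by apply: ler_sum => k _; apply: le_trans (abs2D _ _) _; rewrite abs2M mulrA.
rewrite big_split /= -!mulr_sumr; apply: lerD.
  by apply: ler_wpM2l; [rewrite mulr_ge0 // abs2_ge0 | exact: psum_le_vnorm2].
by apply: ler_wpM2l => //; exact: psum_le_vnorm2.
Qed.

Lemma l2_fin f K : (forall k, (K <= k)%N -> f k = 0) ->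
  l2 f /\ vnorm2 f = psum (fun k => abs2 (f k)) K.
Proof.
move=> h; have h' k : (K <= k)%N -> abs2 (f k) = 0 by move=> /h ->; exact: abs20.
split; first exact: summ_fin (fun k => abs2_ge0 (f k)) h'.
exact: rsum_fin h'.
Qed.

Lemma l2_single (c : C) n : l2 (fun k => c * e n k) /\ vnorm2 (fun k => c * e n k) = abs2 c.
Proof.
have hz : forall k, (n.+1 <= k)%N -> c * e n k = 0.
  by move=> k nk; rewrite /ebasis ifN ?mulr0 //; apply: contraTneq nk => ->; rewrite ltnn.
have [h1 h2] := l2_fin hz.
split => //; rewrite h2 /psum big_nat_recr //= abs2_single eqxx big_nat_cond big1 ?add0r //.
by move=> i /andP[/andP[_ i_n] _]; rewrite abs2_single ifN // ltn_eqF.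
Qed.

Lemma l2_e n : l2 (e n).
Proof.
have [h _] := l2_single 1 n.
by have -> : e n = (fun k => 1 * e n k) by apply: funext => k; rewrite mul1r.
Qed.

Lemma l2_0 : l2 (fun _ : nat => 0 : C) /\ vnorm2 (fun _ : nat => 0 : C) = 0.
Proof.
have hz : forall k, (0 <= k)%N -> (fun _ : nat => 0 : C) k = 0 by [].
by have [h ->] := l2_fin hz; rewrite /psum big_geq.
Qed.

Definition cutv N f : vec R := fun k => if (k < N)%N then 0 else f k.

Lemma cutv_abs2 N f : (fun k => abs2 (cutv N f k)) = cutr N (fun k => abs2 (f k)).
Proof. by apply: funext => k; rewrite /cutv /cutr; case: ifP => // _; rewrite abs20. Qed.

Lemma l2_cutv N f : l2 f -> l2 (cutv N f) /\ vnorm2 (cutv N f) <= vnorm2 f.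
Proof.
move=> hf; rewrite /l2 /vnorm2.
have := summ_cutr N (fun k => abs2_ge0 (f k)) hf; rewrite -cutv_abs2 => -[h1 h2].
split => //; apply: le_trans h2 _; rewrite lerBlDr lerDl.
apply: psum_ge0 => k; exact: abs2_ge0.
Qed.

Lemma van_cutv f : l2 f -> van (fun N => vnorm2 (cutv N f)).
Proof.
move=> hf.
have -> : (fun N => vnorm2 (cutv N f)) = (fun N => rsum (cutr N (fun k => abs2 (f k)))).
  apply: funext => N; apply: rsum_ext => k.
  by rewrite /cutv /cutr; case: ifP => // _; rewrite abs20.
exact: van_cutr (fun k => abs2_ge0 (f k)) hf.
Qed.

Lemma l2_sum (c : nat -> C) (F : nat -> vec R) N : (forall i, l2 (F i)) ->
  l2 (fun k => \sum_(i < N) c i * F i k).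
Proof.
move=> hF; elim: N => [|N IH].
  by have [h _] := l2_0; rewrite (_ : (fun k => _) = fun _ => 0) // funeqE => k; rewrite big_ord0.
have -> : (fun k => \sum_(i < N.+1) c i * F i k) = (fun k => c N * F N k + \sum_(i < N) c i * F i k).
  by apply: funext => k; rewrite big_ord_recr /= addrC.
by have [] := l2_comb (c N) (hF N) IH.
Qed.

End P3.

Section P4.
Variable R : realType.
Notation C := (R[i]).
Notation e := (ebasis R).
Implicit Types f g : vec R.
Implicit Types T X Y : op R.

Definition Mp (M : R) := Num.max M 0.

Lemma Mp_ge0 M : 0 <= Mp M. Proof. by rewrite /Mp le_max lexx orbT. Qed.

Lemma Mp_le (M x v : R) : 0 <= v -> x <= M * v -> x <= Mp M * v.
Proof. by move=> v0 h; apply: le_trans h _; rewrite ler_wpM2r // le_max lexx. Qed.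

Lemma bop_bound' T : bounded_op T -> exists M, 0 <= M /\ forall f, l2 f -> vnorm2 (T f) <= M * vnorm2 f.
Proof.
move=> [_ _ [M hM]]; exists (Mp M); split; first exact: Mp_ge0.
by move=> f hf; apply: Mp_le (vnorm2_ge0 hf) (hM f hf).
Qed.

Lemma bop_0 T : bounded_op T -> T (fun _ => 0) = fun _ => 0.
Proof.
move=> [_ lin _]; have [z0 _] := l2_0 R.
have h := lin 1 _ _ z0 z0.
rewrite (_ : (fun k => 1 * 0 + 0) = (fun _ => 0)) in h; last by apply: funext => k; rewrite mul1r addr0.
apply: funext => k; have := congr1 (fun F => F k) h; rewrite /= mul1r.
by rewrite -{1}[T _ k]addr0 => /addrI <-.
Qed.

Lemma bop_sum T (c : nat -> C) (F : nat -> vec R) N : bounded_op T -> (forall i, l2 (F i)) ->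
  T (fun k => \sum_(i < N) c i * F i k) = fun k => \sum_(i < N) c i * T (F i) k.
Proof.
move=> hT hF; elim: N => [|N IH].
  rewrite (_ : (fun k => _) = fun _ => 0); last by apply: funext => k; rewrite big_ord0.
  by rewrite bop_0 //; apply: funext => k; rewrite big_ord0.
have -> : (fun k => \sum_(i < N.+1) c i * F i k) = (fun k => c N * F N k + \sum_(i < N) c i * F i k).
  by apply: funext => k; rewrite big_ord_recr /= addrC.
have [_ lin _] := hT; rewrite lin //; last exact: l2_sum.
by rewrite IH; apply: funext => k; rewrite big_ord_recr /= addrC.
Qed.

Lemma bop_exp T f n : bounded_op T -> l2 f -> exists M, 0 <= M /\
  forall N, abs2 (T f n - \sum_(k < N) f k * T (e k) n) <= M * vnorm2 (cutv N f).
Proof.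
move=> hT hf; have [M [M0 hM]] := bop_bound' hT; exists M; split => // N.
set P := fun k => \sum_(i < N) f i * e i k.
have lP : l2 P by apply: l2_sum => i; exact: l2_e.
have [lc _] := l2_cutv N hf.
have Ef : f = (fun k => 1 * P k + cutv N f k).
  by apply: funext => k; rewrite mul1r /P sum_e /cutv; case: ifP; rewrite ?addr0 ?add0r.
have -> : T f n = T (fun k => 1 * P k + cutv N f k) n by rewrite -Ef.
have [l2T lin _] := hT; rewrite lin //.
rewrite /P bop_sum //; last by move=> i; exact: l2_e.
rewrite mul1r addrAC subrr add0r.
apply: le_trans (coord_le _ (l2T _ lc)) _.
exact: hM.
Qed.

Lemma bop_exp_van T f n : bounded_op T -> l2 f ->
  van (fun N => abs2 (T f n - \sum_(k < N) f k * T (e k) n)).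
Proof.
move=> hT hf; have [M [M0 hM]] := bop_exp n hT hf.
apply: van_le (van_scale M (van_cutv hf)) _ => N.
by rewrite abs2_ge0 hM.
Qed.

Lemma hs_bop X : hs X -> bounded_op X. Proof. by case. Qed.

Lemma col_l2 X k : hs X -> l2 (X (e k)).
Proof. by move=> [[h _ _] _]; apply: h; exact: l2_e. Qed.

Lemma col_ge0 X k : hs X -> 0 <= vnorm2 (X (e k)).
Proof. by move=> hX; apply: vnorm2_ge0; exact: col_l2. Qed.

Lemma hs_norm2_ge0 X : hs X -> 0 <= hs_norm2 X.
Proof. by move=> hX; apply: rsum_ge0 (hX.2) => k; exact: col_ge0. Qed.

Lemma psum_col_le X N : hs X -> psum (fun k => vnorm2 (X (e k))) N <= hs_norm2 X.
Proof. by move=> hX; have [_] := summ_cvg (fun k => col_ge0 k hX) hX.2; apply. Qed.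

Lemma col_le X k : hs X -> vnorm2 (X (e k)) <= hs_norm2 X.
Proof. by move=> hX; exact: (term_le_rsum k (fun k => col_ge0 k hX) hX.2). Qed.

Lemma entry_le X k i : hs X -> abs2 (X (e k) i) <= hs_norm2 X.
Proof. by move=> hX; apply: le_trans (col_le k hX); apply: coord_le; exact: col_l2. Qed.

Lemma hs_from_bound X B : bounded_op X -> (forall N, psum (fun k => vnorm2 (X (e k))) N <= B) ->
  hs X /\ hs_norm2 X <= B.
Proof.
move=> hX hB.
have c0 k : 0 <= vnorm2 (X (e k)) by apply: vnorm2_ge0; case: hX => h _ _; apply: h; exact: l2_e.
by have [s _ le] := summ_bound c0 hB.
Qed.

Lemma hs_norm2_ext X Y : (forall k, X (e k) = Y (e k)) -> hs_norm2 X = hs_norm2 Y.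
Proof. by move=> h; apply: rsum_ext => k; rewrite h. Qed.

Lemma eqS2_hs X Y : eqS2 X Y -> hs X -> hs Y /\ hs_norm2 Y = hs_norm2 X.
Proof.
move=> eXY hsX; have [[l2X lin [M hM]] sX] := hsX.
have E k : Y (e k) = X (e k) by rewrite eXY //; exact: l2_e.
split; last exact: hs_norm2_ext.
have bY : bounded_op Y.
  split.
  - by move=> f hf; rewrite -eXY //; exact: l2X.
  - move=> a f g hf hg; rewrite -eXY; last by have [] := l2_comb a hf hg.
    by rewrite lin // -!eXY.
  - by exists M => f hf; rewrite -eXY //; exact: hM.
have [] // := @hs_from_bound Y (hs_norm2 X) bY.
move=> N; rewrite /psum; under eq_bigr do rewrite E.
exact: psum_col_le.
Qed.

Lemma Lstar X f n : hs X -> l2 f -> abs2 (X f n) <= 2 * (hs_norm2 X * vnorm2 f).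
Proof.
move=> hX hf.
have vd := bop_exp_van n (hs_bop hX) hf.
apply: (le_of_van (van_scale 2 vd)) => N.
set s := \sum_(k < N) f k * X (e k) n.
have hs_ : abs2 s <= hs_norm2 X * vnorm2 f.
  apply: le_trans (cplx_cs f (fun k => X (e k) n) N) _.
  rewrite mulrC; apply: ler_pM.
  - by apply: sumr_ge0 => i _; exact: abs2_ge0.
  - by apply: sumr_ge0 => i _; exact: abs2_ge0.
  - apply: le_trans (_ : \sum_(k < N) vnorm2 (X (e k)) <= _).
      by apply: ler_sum => k _; apply: coord_le; exact: col_l2.
    by have := psum_col_le N hX; rewrite /psum big_mkord.
  - by have := psum_le_vnorm2 N hf; rewrite /psum big_mkord.
have -> : X f n = s + (X f n - s) by rewrite addrC subrK.
apply: le_trans (abs2D _ _) _.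
have -> : s + (X f n - s) - s = X f n - s by rewrite addrAC subrr add0r.
by rewrite lerD2r ler_wpM2l.
Qed.

End P4.

Section P5.
Variable R : realType.
Notation C := (R[i]).
Notation e := (ebasis R).
Implicit Types f g : vec R.
Implicit Types T X Y : op R.

Lemma hs_comb (a : C) X Y : hs X -> hs Y ->
  hs (fun f k => a * X f k + Y f k) /\
  hs_norm2 (fun f k => a * X f k + Y f k) <= 2 * abs2 a * hs_norm2 X + 2 * hs_norm2 Y.
Proof.
move=> hX hY; have bX := hs_bop hX; have bY := hs_bop hY.
have [l2X linX _] := bX; have [l2Y linY _] := bY.
have [MX [MX0 hMX]] := bop_bound' bX; have [MY [MY0 hMY]] := bop_bound' bY.
have a0 : 0 <= 2 * abs2 a by rewrite mulr_ge0 // abs2_ge0.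
have b : bounded_op (fun f k => a * X f k + Y f k).
  split.
  - by move=> f hf; have [] := l2_comb a (l2X f hf) (l2Y f hf).
  - by move=> c f g hf hg; rewrite linX // linY //; apply: funext => k; ring.
  - exists (2 * abs2 a * MX + 2 * MY) => f hf.
    have [_ h] := l2_comb a (l2X f hf) (l2Y f hf); apply: le_trans h _.
    rewrite [X in _ <= X]mulrDl; apply: lerD.
      by rewrite -(mulrA (2 * abs2 a)); apply: ler_wpM2l => //; exact: hMX.
    by rewrite -(mulrA 2); apply: ler_wpM2l => //; exact: hMY.
apply: hs_from_bound => // N.
apply: le_trans (_ : psum (fun k => 2 * abs2 a * vnorm2 (X (e k)) + 2 * vnorm2 (Y (e k))) N <= _).
  apply: ler_sum => k _; have [] := l2_comb a (col_l2 k hX) (col_l2 k hY) => _ h; exact: h.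
rewrite /psum big_split /= -!mulr_sumr; apply: lerD; apply: ler_wpM2l => //.
  exact: psum_col_le.
exact: psum_col_le.
Qed.

Lemma hs_proj X i j : hs X ->
  hs (fun f k => X f i * e j k) /\ hs_norm2 (fun f k => X f i * e j k) <= hs_norm2 X.
Proof.
move=> hX; have bX := hs_bop hX; have [l2X linX _] := bX.
have [MX [MX0 hMX]] := bop_bound' bX.
have b : bounded_op (fun f k => X f i * e j k).
  split.
  - by move=> f hf; have [] := l2_single (X f i) j.
  - by move=> c f g hf hg; rewrite linX //; apply: funext => k; ring.
  - exists MX => f hf; have [_ ->] := l2_single (X f i) j.
    by apply: le_trans (hMX f hf); apply: coord_le; exact: l2X.
apply: hs_from_bound => // N.
apply: le_trans (psum_col_le N hX); apply: ler_sum => k _.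
have [_ ->] := l2_single (X (e k) i) j.
by apply: coord_le; exact: col_l2.
Qed.

Lemma sum_e' (c : nat -> C) J l : \sum_(i < J) c i * e l i = if (l < J)%N then c l else 0.
Proof.
case: ifP => lJ.
  rewrite (bigD1 (Ordinal lJ)) //= /ebasis eqxx mulr1 big1 ?addr0 // => i il.
  rewrite ifN ?mulr0 //; apply: contra il => /eqP il'; apply/eqP/val_inj => /=; by rewrite il'.
rewrite big1 // => i _; rewrite /ebasis ifN ?mulr0 //.
by apply: contraFN lJ => /eqP <-.
Qed.

Definition Rc (c : nat -> C) J m : op R := fun f k => (\sum_(i < J) c i * f i) * e m k.

Lemma hs_Rc c J m : hs (Rc c J m) /\ hs_norm2 (Rc c J m) = psum (fun l => abs2 (c l)) J.
Proof.
set u := fun l => if (l < J)%N then abs2 (c l) else 0.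
have u0 l : 0 <= u l by rewrite /u; case: ifP => // _; exact: abs2_ge0.
have col l : vnorm2 (Rc c J m (e l)) = u l.
  rewrite /Rc sum_e' /u; have [_ ->] := l2_single (if (l < J)%N then c l else 0) m.
  by case: ifP => // _; rewrite abs20.
have uJ k : (J <= k)%N -> u k = 0 by rewrite /u leqNgt => /negbTE ->.
have b : bounded_op (Rc c J m).
  split.
  - by move=> f hf; have [] := l2_single (\sum_(i < J) c i * f i) m.
  - move=> a f g hf hg; apply: funext => k; rewrite /Rc.
    have -> : \sum_(i < J) c i * (a * f i + g i) = a * \sum_(i < J) c i * f i + \sum_(i < J) c i * g i.
      rewrite mulr_sumr -big_split; apply: eq_bigr => i _ /=; ring.
    ring.
  - exists (psum (fun l => abs2 (c l)) J) => f hf.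
    have [_ ->] := l2_single (\sum_(i < J) c i * f i) m.
    apply: le_trans (cplx_cs c f J) _; rewrite /psum big_mkord ler_wpM2l //.
      by apply: sumr_ge0 => i _; exact: abs2_ge0.
    by have := psum_le_vnorm2 J hf; rewrite /psum big_mkord.
have sumJ : psum u J = psum (fun l => abs2 (c l)) J.
  by apply: eq_big_nat => l /andP[_ lJ]; rewrite /u lJ.
have hb : forall L, psum (fun k => vnorm2 (Rc c J m (e k))) L <= psum u J.
  move=> L; rewrite /psum; under eq_bigr do rewrite col.
  case: (leqP L J) => LJ; first exact: (psum_nd u0 LJ).
  rewrite (big_cat_nat (leq0n J) (ltnW LJ)) /=.
  have -> : \sum_(J <= i < L) u i = 0.
    by rewrite big_nat_cond big1 // => i /andP[/andP[Ji _] _]; exact: uJ.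
  by rewrite addr0.
have [h _] := hs_from_bound b hb.
split => //; rewrite -sumJ -(rsum_fin uJ); exact: rsum_ext.
Qed.

Lemma eps_Rc m j : @eps R m j = Rc (e j) j.+1 m.
Proof.
apply: funext => f; rewrite eps_eq /Rc; apply: funext => k; congr (_ * _).
under eq_bigr do rewrite mulrC.
by rewrite sum_e' ltnSn.
Qed.

Lemma hs_eps m j : hs (@eps R m j).
Proof. by rewrite eps_Rc; case: (hs_Rc (e j) j.+1 m). Qed.

Definition Z0 : op R := fun f k => 0.

Lemma hs_Z0 : hs Z0 /\ hs_norm2 Z0 = 0.
Proof.
have -> : Z0 = Rc (fun _ => 0) 0 0.
  by apply: funext => f; apply: funext => k; rewrite /Rc big_ord0 mul0r.
by have [h ->] := hs_Rc (fun _ => 0) 0 0; split => //; rewrite /psum big_geq.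
Qed.

Lemma hs_sum (c : nat -> C) (X : nat -> op R) N : (forall i, hs (X i)) ->
  hs (fun f k => \sum_(i < N) c i * X i f k).
Proof.
move=> hX; elim: N => [|N IH].
  have -> : (fun f k => \sum_(i < 0) c i * X i f k) = Z0.
    by apply: funext => f; apply: funext => k; rewrite big_ord0.
  by case: hs_Z0.
have -> : (fun f k => \sum_(i < N.+1) c i * X i f k) =
          (fun f k => c N * X N f k + \sum_(i < N) c i * X i f k).
  by apply: funext => f; apply: funext => k; rewrite big_ord_recr /= addrC.
by have [] := hs_comb (c N) (hX N) IH.
Qed.

End P5.

Section P6.
Variable R : realType.
Notation C := (R[i]).
Notation e := (ebasis R).
Implicit Types f g : vec R.
Implicit Types T X Y : op R.

Lemma abs2N (z : C) : abs2 (- z) = abs2 z.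
Proof. by case: z => a b; rewrite /abs2 /= !sqrrN. Qed.

Lemma abs2_conj (z : C) : abs2 (z^*) = abs2 z.
Proof. by case: z => a b; rewrite /abs2 /= sqrrN. Qed.

Lemma uniq_lim (z1 z2 : C) (s : nat -> C) :
  van (fun J => abs2 (z1 - s J)) -> van (fun J => abs2 (z2 - s J)) -> z1 = z2.
Proof.
move=> v1 v2; apply/eqP; rewrite -subr_eq0; apply/eqP; apply: abs2_eq0.
apply: (le_of_van (van_add (van_scale 2 v1) (van_scale 2 v2))) => J.
have -> : z1 - z2 = (z1 - s J) + - (z2 - s J) by rewrite opprB addrA subrK.
by rewrite add0r; apply: le_trans (abs2D _ _) _; rewrite abs2N.
Qed.

Definition rowcut N X : op R := fun f i => if (i < N)%N then 0 else X f i.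

Lemma hs_rowcut N X : hs X -> hs (rowcut N X) /\ (forall k, rowcut N X (e k) = cutv N (X (e k))).
Proof.
move=> hX; have bX := hs_bop hX; have [l2X linX [M hM]] := bX.
have E k : rowcut N X (e k) = cutv N (X (e k)) by [].
split => //.
have b : bounded_op (rowcut N X).
  split.
  - by move=> f hf; have [] := l2_cutv N (l2X f hf).
  - move=> a f g hf hg; rewrite /rowcut linX //; apply: funext => i.
    by case: ifP => _; rewrite ?mulr0 ?addr0.
  - exists M => f hf; apply: le_trans (hM f hf).
    by have [] := l2_cutv N (l2X f hf).
have [] // := @hs_from_bound _ (rowcut N X) (hs_norm2 X) b.
move=> L; apply: le_trans (psum_col_le L hX); apply: ler_sum => k _.
by rewrite E; have [] := l2_cutv N (col_l2 k hX).
Qed.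

Lemma hs_tail X : hs X -> van (fun N => hs_norm2 (rowcut N X)).
Proof.
move=> hX.
have h1 : forall N k, 0 <= vnorm2 (cutv N (X (e k))) <= vnorm2 (X (e k)).
  move=> N k; have [h1 h2] := l2_cutv N (col_l2 k hX).
  by rewrite h2 vnorm2_ge0.
have h3 : forall k, van (fun N => vnorm2 (cutv N (X (e k)))).
  by move=> k; apply: van_cutv; exact: col_l2.
have [_ H] := van_dom h1 hX.2 h3.
apply: van_le H _ => N.
have -> : hs_norm2 (rowcut N X) = rsum (fun k => vnorm2 (cutv N (X (e k)))) by apply: rsum_ext.
rewrite lexx andbT; apply: rsum_ge0.
- by move=> k; apply: vnorm2_ge0; have [] := l2_cutv N (col_l2 k hX).
- by have [h _] := hs_rowcut N hX; move: h.2.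
Qed.

Lemma Rc_sum (c : nat -> C) J m : Rc c J m = fun f k => \sum_(j < J) c j * @eps R m j f k.
Proof.
apply: funext => f; apply: funext => k; rewrite /Rc mulr_suml.
by apply: eq_bigr => j _; rewrite eps_eq mulrA.
Qed.

Lemma row_summ X m : hs X -> summ (fun l => abs2 (X (e l) m)).
Proof.
move=> hX; have [] // := @summ_bound _ (fun l => abs2 (X (e l) m)) (hs_norm2 X).
  by move=> l; exact: abs2_ge0.
move=> N; apply: le_trans (psum_col_le N hX); apply: ler_sum => l _.
by apply: coord_le; exact: col_l2.
Qed.

End P6.

Section P7.
Variable R : realType.
Notation C := (R[i]).
Notation e := (ebasis R).
Implicit Types f g : vec R.
Implicit Types T X Y : op R.
Variable A : op R -> op R.
Hypothesis hA : bounded_S2op A.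

Lemma A_hs X : hs X -> hs (A X). Proof. by case: hA => h _ _ _; exact: h. Qed.

Lemma A_lin (a : C) X Y : hs X -> hs Y ->
  eqS2 (A (fun f k => a * X f k + Y f k)) (fun f k => a * A X f k + A Y f k).
Proof. by case: hA => _ _ h _; exact: h. Qed.

Lemma A_bnd : exists M, 0 <= M /\ forall X, hs X -> hs_norm2 (A X) <= M * hs_norm2 X.
Proof.
case: hA => _ _ _ [M hM]; exists (Mp M); split; first exact: Mp_ge0.
by move=> X hX; apply: Mp_le (hs_norm2_ge0 hX) (hM X hX).
Qed.

Lemma A_Z0 f : l2 f -> A (@Z0 R) f = fun _ => 0.
Proof.
move=> hf; have [hz _] := hs_Z0 R.
have h := A_lin 1 hz hz hf.
rewrite (_ : (fun f k => 1 * Z0 f k + Z0 f k) = @Z0 R) in h; last first.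
  by apply: funext => g; apply: funext => k; rewrite /Z0 mul1r addr0.
apply: funext => k; have := congr1 (fun F => F k) h; rewrite /= mul1r.
by rewrite -{1}[A _ f k]addr0 => /addrI <-.
Qed.

Lemma A_sum (c : nat -> C) (X : nat -> op R) N : (forall i, hs (X i)) ->
  eqS2 (A (fun f k => \sum_(i < N) c i * X i f k)) (fun f k => \sum_(i < N) c i * A (X i) f k).
Proof.
move=> hX; elim: N => [|N IH].
  have -> : (fun f k => \sum_(i < 0) c i * X i f k) = @Z0 R.
    by apply: funext => f; apply: funext => k; rewrite big_ord0.
  by move=> f hf; rewrite A_Z0 //; apply: funext => k; rewrite big_ord0.
have -> : (fun f k => \sum_(i < N.+1) c i * X i f k) =
          (fun f k => c N * X N f k + \sum_(i < N) c i * X i f k).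
  by apply: funext => f; apply: funext => k; rewrite big_ord_recr /= addrC.
move=> f hf; rewrite (A_lin (c N) (hX N) (hs_sum c N hX)) //.
by rewrite IH //; apply: funext => k; rewrite big_ord_recr /= addrC.
Qed.

End P7.

Lemma conjM_abs2' (R : realType) (z : R[i]) : z^* * z = ((abs2 z)%:C)%C.
Proof. exact: conjM_abs2. Qed.

Lemma ebasis_kk (R : realType) k : ebasis R k k = 1.
Proof. by rewrite /ebasis eqxx. Qed.

Lemma ebasis_neq (R : realType) l k : l != k -> ebasis R l k = 0.
Proof. by move=> lk; rewrite /ebasis ifN // eq_sym. Qed.

Theorem lemma3p4 (R : realType) (A : op R -> op R) :
  bounded_S2op A ->
  exists a : nat -> nat -> op R,
    (forall n m, bounded_op (a n m) /\
       forall j k, dotH (ebasis R j) (a n m (ebasis R k))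
                   = hs_dot (eps n k) (A (eps m j))) /\
    (forall eta : op R, hs eta ->
       exists S : nat -> op R,
         (forall n, hs (S n) /\
            hs_series_to (fun m => fun f => eps n m (eta (a n m f))) (S n)) /\
         hs_series_to S (A eta)).
Proof.
move=> hA.
have [M [M0 hM]] := A_bnd hA.
pose a : nat -> nat -> op R := fun n m f j => A (eps m j) f n.
have hAe m j : hs (A (eps m j)) := A_hs hA (hs_eps R m j).
have abound n m f : l2 f -> forall J, psum (fun j => abs2 (a n m f j)) J <= 2 * M * vnorm2 f.
  move=> hf J.
  pose x := fun j => A (eps m j) f n.
  pose s := psum (fun j => abs2 (x j)) J.
  have s0 : 0 <= s by apply: psum_ge0 => j; exact: abs2_ge0.
  pose c := fun j => (x j)^*.
  have [hc hcn] := hs_Rc c J m.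
  have hcn' : hs_norm2 (Rc c J m) = s.
    by rewrite hcn /psum /s; apply: eq_bigr => j _; rewrite /c abs2_conj.
  have E : A (Rc c J m) f n = (s%:C)%C.
    rewrite Rc_sum (A_sum hA c J (hs_eps R m) hf) /=.
    rewrite /s /psum big_mkord rmorph_sum; apply: eq_bigr => j _.
    by rewrite /c conjM_abs2'.
  have L := Lstar n (A_hs hA hc) hf.
  rewrite E abs2_real in L.
  have hb := hM _ hc; rewrite hcn' in hb.
  have V0 := vnorm2_ge0 hf.
  change (s <= 2 * M * vnorm2 f).
  have L2 : s ^+ 2 <= 2 * M * vnorm2 f * s.
    apply: le_trans L _.
    have : hs_norm2 (A (Rc c J m)) * vnorm2 f <= M * s * vnorm2 f by rewrite ler_wpM2r.
    nra.
  case: (eqVneq s 0) => [->|sn0]; first by rewrite !mulr_ge0.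
  have sp : 0 < s by rewrite lt_neqAle eq_sym sn0 s0.
  by rewrite -(ler_pM2r sp) -expr2.
have a_bop n m : bounded_op (a n m).
  split.
  - by move=> f hf; have [h _] := l2_bound (abound n m f hf).
  - move=> b f g hf hg; apply: funext => j; rewrite /a.
    by have [_ lin _] := hs_bop (hAe m j); rewrite lin.
  - by exists (2 * M) => f hf; have [_ h] := l2_bound (abound n m f hf).
exists a; split.
  move=> n m; split => // j k.
  rewrite dot_e /a /hs_dot (@csum_single _ _ k).
    by rewrite eps_eq dot_single ebasis_kk conjC1 mul1r.
  move=> l lk; rewrite eps_eq dot_single ebasis_neq // conjC0 mul0r //.
move=> eta heta.
have hAeta := A_hs hA heta.
pose S : nat -> op R := fun n f i => A eta f n * ebasis R n i.
exists S; split; last first.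
  rewrite /hs_series_to; apply: van_cvg0.
  have E N : hs_norm2 (opsub (A eta) (opsum N S)) = hs_norm2 (rowcut N (A eta)).
    apply: hs_norm2_ext => k; apply: funext => i; rewrite /opsub /opsum /S /rowcut.
    rewrite (sum_e (fun n => A eta (ebasis R k) n)).
    by case: ifP => _; rewrite ?subrr ?subr0.
  by rewrite (funext E); exact: hs_tail.
move=> n; split; first by have [] := hs_proj n n hAeta.
pose Rrow := fun m : nat => (fun f i => eta f m * ebasis R m i) : op R.
have hRrow m : hs (Rrow m) by have [] := hs_proj m m heta.
have claim m k : eta (a n m (ebasis R k)) m = A (Rrow m) (ebasis R k) n.
  pose g := a n m (ebasis R k).
  have hg : l2 g by have [h _ _] := a_bop n m; apply: h; exact: l2_e.
  have v1 := bop_exp_van m (hs_bop heta) hg.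
  apply: (uniq_lim v1).
  pose cr := fun j => eta (ebasis R j) m.
  pose RJ := fun J => Rc cr J m.
  have hRJ J : hs (RJ J) by have [] := hs_Rc cr J m.
  have F1 J : A (RJ J) (ebasis R k) n = \sum_(j < J) g j * eta (ebasis R j) m.
    rewrite /RJ Rc_sum (A_sum hA cr J (hs_eps R m) (l2_e R k)) /=.
    by apply: eq_bigr => j _; rewrite mulrC.
  pose D := fun J => (fun f i => -1 * RJ J f i + Rrow m f i) : op R.
  have hD J : hs (D J) by have [] := hs_comb (-1) (hRJ J) (hRrow m).
  have F2 J : A (Rrow m) (ebasis R k) n - A (RJ J) (ebasis R k) n = A (D J) (ebasis R k) n.
    by rewrite (A_lin hA (-1) (hRJ J) (hRrow m) (l2_e R k)) mulN1r addrC.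
  have col J l : vnorm2 (D J (ebasis R l)) = cutr J (fun l => abs2 (eta (ebasis R l) m)) l.
    have -> : D J (ebasis R l) = fun i => (if (l < J)%N then 0 else eta (ebasis R l) m) * ebasis R m i.
      apply: funext => i; rewrite /D /RJ /Rc /Rrow sum_e' /cr.
      by case: ifP => _; ring.
    have [_ ->] := l2_single (if (l < J)%N then 0 else eta (ebasis R l) m) m.
    by rewrite /cutr; case: ifP => _ //; exact: abs20.
  have rs := row_summ m heta.
  have v2 := van_cutr (fun l => abs2_ge0 (eta (ebasis R l) m)) rs.
  apply: van_le (van_scale M v2) _ => J.
  rewrite abs2_ge0 /= -F1 F2.
  apply: le_trans (entry_le k n (A_hs hA (hD J))) _.
  apply: le_trans (hM _ (hD J)) _.
  have -> : hs_norm2 (D J) = rsum (cutr J (fun l => abs2 (eta (ebasis R l) m))).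
    by apply: rsum_ext => l; exact: col.
  by [].
rewrite /hs_series_to; apply: van_cvg0.
pose Q := fun N => (fun f i => \sum_(m < N) 1 * Rrow m f i) : op R.
have hQ N : hs (Q N) by exact: (hs_sum (fun _ => 1) N hRrow).
have ERc N : rowcut N eta = fun f i => -1 * Q N f i + eta f i.
  apply: funext => f; apply: funext => i; rewrite /rowcut /Q /Rrow.
  under eq_bigr do rewrite mul1r.
  by rewrite (sum_e (fun m => eta f m)); case: ifP => _; rewrite ?mulN1r ?addNr ?oppr0 ?add0r.
have key N k : opsub (S n) (opsum N (fun m => fun f => eps n m (eta (a n m f)))) (ebasis R k)
    = fun i => A (rowcut N eta) (ebasis R k) n * ebasis R n i.
  apply: funext => i; rewrite /opsub /opsum /S.
  under eq_bigr do rewrite eps_eq claim.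
  rewrite ERc (A_lin hA (-1) (hQ N) heta (l2_e R k)) /=.
  rewrite (A_sum hA (fun _ => 1) N hRrow (l2_e R k)) /=.
  under [X in _ = (_ * X + _) * _]eq_bigr do rewrite mul1r.
  by rewrite mulN1r mulrDl mulNr mulr_suml addrC.
have [hrc _] := hs_rowcut 0 heta.
have hP N : hs (fun f i => A (rowcut N eta) f n * ebasis R n i).
  by have [h _] := hs_rowcut N heta; have [] := hs_proj n n (A_hs hA h).
apply: van_le (van_scale M (hs_tail heta)) _ => N.
rewrite (_ : hs_norm2 (opsub _ _) = hs_norm2 (fun f i => A (rowcut N eta) f n * ebasis R n i)); last first.
  exact: hs_norm2_ext (key N).
apply/andP; split; first exact: hs_norm2_ge0.
have [h _] := hs_rowcut N heta.
have [_ h2] := hs_proj n n (A_hs hA h).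
apply: le_trans h2 _; exact: hM.
Qed.
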